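(* Let $(\bm u^{\mathrm d}(t),\bm y^{\mathrm d}(t))_{t=0}^{T-1}$, with $T>1$, be data points each belonging to $\mathscr{B}_{\mathrm{DF}}$, and let $H\doteq\begin{bmatrix}\bm u^{\mathrm d}(0) & \cdots & \bm u^{\mathrm d}(T-1)\\ \bm y^{\mathrm d}(0) & \cdots & \bm y^{\mathrm d}(T-1)\end{bmatrix}\in\mathbb{R}^{(6n+1)\times T}$. Assume $\operatorname{rank} H = 3n+1$. Then a point $(u,y)\in\mathbb{R}^{2n}\times\mathbb{R}^{4n+1}$ with $u=(p,q)$ and $y=(P,Q,\ell,\mathsf v,\mathsf v_0)$ belongs to $\mathscr{B}_{\mathrm{DF}}$ if and only if there exists $g\in\mathbb{R}^{T}$ such that $\begin{bmatrix}u\\ y\end{bmatrix}=Hg$ and $\mathsf v\odot\ell=P\odot P+Q\odot Q$, where $\odot$ denotes the element-wise product.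
   Context: Network: a tree with nodes $\mathcal N=\{0,1,\dots,n\}$ rooted at the slack node $0$; $\mathcal N_+=\{1,\dots,n\}$. Each $i\in\mathcal N_+$ has a unique parent $\pi(i)\in\mathcal N$, and the edge $(i,\pi(i))$ carries resistance $\mathtt r_i\ge 0$ and reactance $\mathtt x_i\ge0$ with $\mathtt r_i^2+\mathtt x_i^2\neq 0$. Variables: nodal net injections $p,q\in\mathbb{R}^n$, branch flows $P,Q\in\mathbb{R}^n$, squared branch currents $\ell\in\mathbb{R}^n$, squared voltage magnitudes $\mathsf v\in\mathbb{R}^n$ at nodes of $\mathcal N_+$, and slack squared voltage $\mathsf v_0\in\mathbb{R}$ (all vectors indexed by $\mathcal N_+$). The DistFlow equations are, for every $i\in\mathcal N_+$ with $j=\pi(i)$: (1) $P_i=p_i+\sum_{k:\pi(k)=i}(P_k-\mathtt r_k\ell_k)$; (2) $Q_i=q_i+\sum_{k:\pi(k)=i}(Q_k-\mathtt x_k\ell_k)$; (3) $\mathsf v_j=\mathsf v_i-2(\mathtt r_iP_i+\mathtt x_iQ_i)+(\mathtt r_i^2+\mathtt x_i^2)\ell_i$ (with $\mathsf v_j=\mathsf v_0$ when $j=0$); (4) $\ell_i\mathsf v_i=P_i^2+Q_i^2$. Input $u=(p,q)\in\mathbb{R}^{2n}$, output $y=(P,Q,\ell,\mathsf v,\mathsf v_0)\in\mathbb{R}^{4n+1}$ (vertical stacking in this order). $\mathscr{B}_{\mathrm{DF}}\subset\mathbb{R}^{2n}\times\mathbb{R}^{4n+1}$ is the set of all $(u,y)$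 satisfying (1)–(4). *)

(* Defs.v *)
From mathcomp Require Import all_boot all_order all_algebra.
From mathcomp Require Import reals.
Set Implicit Arguments. Unset Strict Implicit. Unset Printing Implicit Defensive.
Import Order.TTheory GRing.Theory Num.Theory.
Local Open Scope ring_scope.

(* Nodes of N_+ = {1..n} are represented by 'I_n; the slack node 0 by None.
   parent i = Some j  means  pi(i) = j in N_+,  parent i = None means pi(i) = 0. *)

Definition is_tree (n : nat) (parent : 'I_n -> option 'I_n) : Prop :=
  forall i : 'I_n, exists k : nat, iter k (fun o => obind parent o) (Some i) = None.

Section Layout.
Context {R : realType} {n : nat}.
Definition p_of (u : 'cV[R]_(n + n)) : 'cV[R]_n := usubmx u.
Definition q_of (u : 'cV[R]_(n + n)) : 'cV[R]_n := dsubmx u.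
Definition P_of (y : 'cV[R]_(n + (n + (n + (n + 1))))) : 'cV[R]_n := usubmx y.
Definition Q_of (y : 'cV[R]_(n + (n + (n + (n + 1))))) : 'cV[R]_n :=
  usubmx (dsubmx y).
Definition l_of (y : 'cV[R]_(n + (n + (n + (n + 1))))) : 'cV[R]_n :=
  usubmx (dsubmx (dsubmx y)).
Definition v_of (y : 'cV[R]_(n + (n + (n + (n + 1))))) : 'cV[R]_n :=
  usubmx (dsubmx (dsubmx (dsubmx y))).
Definition v0_of (y : 'cV[R]_(n + (n + (n + (n + 1))))) : R :=
  (dsubmx (dsubmx (dsubmx (dsubmx y)))) ord0 ord0.
End Layout.

Definition hadamard {R : realType} {m k : nat} (A B : 'M[R]_(m, k)) : 'M[R]_(m, k) :=
  \matrix_(i, j) (A i j * B i j).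

Definition in_BDF {R : realType} {n : nat} (parent : 'I_n -> option 'I_n)
  (r x : 'I_n -> R) (u : 'cV[R]_(n + n)) (y : 'cV[R]_(n + (n + (n + (n + 1))))) : Prop :=
  let p := p_of u in let q := q_of u in
  let P := P_of y in let Q := Q_of y in let l := l_of y in
  let v := v_of y in let v0 := v0_of y in
  forall i : 'I_n,
    [/\ P i ord0 = p i ord0 + \sum_(k : 'I_n | parent k == Some i) (P k ord0 - r k * l k ord0),
        Q i ord0 = q i ord0 + \sum_(k : 'I_n | parent k == Some i) (Q k ord0 - x k * l k ord0),
        (match parent i with Some j => v j ord0 | None => v0 end)
          = v i ord0 - 2 * (r i * P i ord0 + x i * Q i ord0) + (r i ^+ 2 + x i ^+ 2) * l i ord0
      & l i ord0 * v i ord0 = P i ord0 ^+ 2 + Q i ord0 ^+ 2].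

Definition data_matrix {R : realType} {n T : nat}
  (ud : 'I_T -> 'cV[R]_(n + n)) (yd : 'I_T -> 'cV[R]_(n + (n + (n + (n + 1))))) :
  'M[R]_(n + n + (n + (n + (n + (n + 1)))), T) :=
  \matrix_(i, t) (col_mx (ud t) (yd t)) i ord0.

(* Main.v *)
Require Import Defs.
From mathcomp Require Import all_boot all_order all_algebra.
From mathcomp Require Import reals.
From mathcomp Require Import ring lra zify.
Import Order.TTheory GRing.Theory Num.Theory.
Set Implicit Arguments. Unset Strict Implicit.
Local Open Scope ring_scope.

Lemma entryP (R : realType) m k (a : R) (A B : 'M[R]_(m, k)) i j :
  (a *: A + B) i j = a * A i j + B i j.
Proof. by rewrite !mxE. Qed.

Lemma sum_lin (R : realType) (I : finType) (Pp : pred I) (a : R) (F G L M w : I -> R) :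
  \sum_(k | Pp k) (a * F k + G k - w k * (a * L k + M k)) =
  a * \sum_(k | Pp k) (F k - w k * L k) + \sum_(k | Pp k) (G k - w k * M k).
Proof. rewrite mulr_sumr -big_split; apply: eq_bigr => k _ /=; ring. Qed.

Definition res1 (R : realType) n (parent : 'I_n -> option 'I_n) (r : 'I_n -> R) i
  (c : 'cV[R]_(n + n + (n + (n + (n + (n + 1)))))) : R :=
  P_of (dsubmx c) i ord0 - (p_of (usubmx c) i ord0 +
    \sum_(k : 'I_n | parent k == Some i) (P_of (dsubmx c) k ord0 - r k * l_of (dsubmx c) k ord0)).

Definition res2 (R : realType) n (parent : 'I_n -> option 'I_n) (x : 'I_n -> R) i
  (c : 'cV[R]_(n + n + (n + (n + (n + (n + 1)))))) : R :=
  Q_of (dsubmx c) i ord0 - (q_of (usubmx c) i ord0 +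
    \sum_(k : 'I_n | parent k == Some i) (Q_of (dsubmx c) k ord0 - x k * l_of (dsubmx c) k ord0)).

Definition res3 (R : realType) n (parent : 'I_n -> option 'I_n) (r x : 'I_n -> R) i
  (c : 'cV[R]_(n + n + (n + (n + (n + (n + 1)))))) : R :=
  (match parent i with Some j => v_of (dsubmx c) j ord0 | None => v0_of (dsubmx c) end)
  - (v_of (dsubmx c) i ord0 - 2 * (r i * P_of (dsubmx c) i ord0 + x i * Q_of (dsubmx c) i ord0)
     + (r i ^+ 2 + x i ^+ 2) * l_of (dsubmx c) i ord0).

Lemma res1_lin (R : realType) n (parent : _ -> option 'I_n) r i (a : R) (c d : 'cV[R]_(n + n + (n + (n + (n + (n + 1)))))) :
  res1 parent r i (a *: c + d) = a * res1 parent r i c + res1 parent r i d.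
Proof.
rewrite /res1 /P_of /p_of /l_of !linearP.
under eq_bigr => k _ do rewrite !entryP.
rewrite sum_lin !entryP; ring.
Qed.

Lemma res2_lin (R : realType) n (parent : _ -> option 'I_n) x i (a : R) (c d : 'cV[R]_(n + n + (n + (n + (n + (n + 1)))))) :
  res2 parent x i (a *: c + d) = a * res2 parent x i c + res2 parent x i d.
Proof.
rewrite /res2 /Q_of /q_of /l_of !linearP.
under eq_bigr => k _ do rewrite !entryP.
rewrite sum_lin !entryP; ring.
Qed.

Lemma res3_lin (R : realType) n (parent : _ -> option 'I_n) r x i (a : R) (c d : 'cV[R]_(n + n + (n + (n + (n + (n + 1)))))) :
  res3 parent r x i (a *: c + d) = a * res3 parent r x i c + res3 parent r x i d.
Proof.
rewrite /res3 /P_of /Q_of /v_of /v0_of /l_of; case: (parent i) => [j|];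
rewrite !linearP !entryP; ring.
Qed.

Definition inL (R : realType) n (parent : 'I_n -> option 'I_n) (r x : 'I_n -> R)
  (c : 'cV[R]_(n + n + (n + (n + (n + (n + 1)))))) : Prop :=
  forall i, [/\ res1 parent r i c = 0, res2 parent x i c = 0 & res3 parent r x i c = 0].

Definition sel n (i : 'I_(n + (n + (n + 1)))) : 'I_(n + n + (n + (n + (n + (n + 1))))) :=
 rshift (n + n) (match split i with
   | inl a => lshift (n + (n + (n + 1))) a
   | inr b => rshift n (match split b with
       | inl a => lshift (n + (n + 1)) a
       | inr b2 => rshift n (match split b2 with
            | inl a => lshift (n + 1) a
            | inr b3 => rshift n (rshift n b3) end) end) end).

Definition Pr (R : realType) n : 'M[R]_(n + (n + (n + 1)), n + n + (n + (n + (n + (n + 1))))) :=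
  \matrix_(i, j) ((j == sel i)%:R).

Lemma PrE (R : realType) n (c : 'cV[R]_(n + n + (n + (n + (n + (n + 1)))))) i :
  (Pr R n *m c) i ord0 = c (sel i) ord0.
Proof.
rewrite mxE (bigD1 (sel i)) //= mxE eqxx mul1r big1 ?addr0 // => j /negbTE ne.
by rewrite mxE ne mul0r.
Qed.

Lemma selP (R : realType) n (c : 'cV[R]_(n + n + (n + (n + (n + (n + 1)))))) k :
  P_of (dsubmx c) k ord0 = c (sel (lshift _ k)) ord0.
Proof. by rewrite /P_of !mxE /sel (unsplitK (inl _ _)). Qed.

Lemma selQ (R : realType) n (c : 'cV[R]_(n + n + (n + (n + (n + (n + 1)))))) k :
  Q_of (dsubmx c) k ord0 = c (sel (rshift n (lshift _ k))) ord0.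
Proof. by rewrite /Q_of !mxE /sel (unsplitK (inr _ _)) (unsplitK (inl _ _)). Qed.

Lemma selL (R : realType) n (c : 'cV[R]_(n + n + (n + (n + (n + (n + 1)))))) k :
  l_of (dsubmx c) k ord0 = c (sel (rshift n (rshift n (lshift _ k)))) ord0.
Proof. by rewrite /l_of !mxE /sel !(unsplitK (inr _ _)) (unsplitK (inl _ _)). Qed.

Lemma selV0 (R : realType) n (c : 'cV[R]_(n + n + (n + (n + (n + (n + 1)))))) :
  v0_of (dsubmx c) = c (sel (rshift n (rshift n (rshift n ord0)))) ord0.
Proof. by rewrite /v0_of !mxE /sel !(unsplitK (inr _ _)). Qed.

Lemma colz (R : realType) m (A : 'cV[R]_m) : (forall i, A i ord0 = 0) -> A = 0.
Proof. by move=> h; apply/matrixP => i j; rewrite (ord1 j) mxE h. Qed.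

Lemma kernel (R : realType) n (parent : 'I_n -> option 'I_n) (r x : 'I_n -> R)
  (Ht : is_tree parent) (c : 'cV[R]_(n + n + (n + (n + (n + (n + 1)))))) :
  inL parent r x c -> Pr R n *m c = 0 -> c = 0.
Proof.
move=> hL hPr.
have z i : c (sel i) ord0 = 0 by rewrite -PrE hPr mxE.
have hP k : P_of (dsubmx c) k ord0 = 0 by rewrite selP z.
have hQ k : Q_of (dsubmx c) k ord0 = 0 by rewrite selQ z.
have hl k : l_of (dsubmx c) k ord0 = 0 by rewrite selL z.
have hv0 : v0_of (dsubmx c) = 0 by rewrite selV0 z.
have hp k : usubmx (usubmx c) k ord0 = 0.
  case: (hL k) => h1 _ _; move: h1; rewrite /res1 hP big1 ?addr0; first by change (usubmx (usubmx c) k ord0) with (p_of (usubmx c) k ord0); lra.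
  by move=> j _; rewrite hP hl mulr0 subr0.
have hq k : dsubmx (usubmx c) k ord0 = 0.
  case: (hL k) => _ h1 _; move: h1; rewrite /res2 hQ big1 ?addr0; first by change (dsubmx (usubmx c) k ord0) with (q_of (usubmx c) k ord0); lra.
  by move=> j _; rewrite hQ hl mulr0 subr0.
have hv3 i : (match parent i with Some j => v_of (dsubmx c) j ord0 | None => v0_of (dsubmx c) end)
   = v_of (dsubmx c) i ord0.
  by case: (hL i) => _ _; rewrite /res3 hP hQ hl !mulr0 !addr0 mulr0 subr0 => h; apply/eqP; rewrite -subr_eq0 h eqxx.
have hv i : usubmx (dsubmx (dsubmx (dsubmx (dsubmx c)))) i ord0 = 0.
  have [k hk] := Ht i.
  elim: k i hk => [|k IH] i; first by [].
  rewrite iterSr /= => h; move: h (hv3 i); case: (parent i) => [j|] h e.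
    change (v_of (dsubmx c) i ord0 = 0); by rewrite -e IH.
  change (v_of (dsubmx c) i ord0 = 0); by rewrite -e.
have hv0' : dsubmx (dsubmx (dsubmx (dsubmx (dsubmx c)))) = 0.
  by apply: colz => i; rewrite (ord1 i); exact: hv0.
rewrite -[c]vsubmxK -[usubmx c]vsubmxK (colz hp) (colz hq) col_mx0.
rewrite -[dsubmx c]vsubmxK (colz (A:=usubmx (dsubmx c)) hP).
rewrite -[dsubmx (dsubmx c)]vsubmxK (colz (A:=usubmx (dsubmx (dsubmx c))) hQ).
rewrite -[dsubmx (dsubmx (dsubmx c))]vsubmxK (colz (A:=usubmx (dsubmx (dsubmx (dsubmx c)))) hl).
rewrite -[dsubmx (dsubmx (dsubmx (dsubmx c)))]vsubmxK (colz hv) hv0'.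
by rewrite !col_mx0.
Qed.

Lemma hadE (R : realType) m k (A B : 'M[R]_(m, k)) i j : hadamard A B i j = A i j * B i j.
Proof. by rewrite mxE. Qed.
Lemma addE (R : realType) m k (A B : 'M[R]_(m, k)) i j : (A + B) i j = A i j + B i j.
Proof. by rewrite mxE. Qed.

Lemma inL_lin (R : realType) n (parent : 'I_n -> option 'I_n) (r x : 'I_n -> R) a c d :
  inL parent r x c -> inL parent r x d -> inL parent r x (a *: c + d).
Proof.
move=> hc hd i; case: (hc i) => h1 h2 h3; case: (hd i) => h1' h2' h3'.
by split; rewrite ?res1_lin ?res2_lin ?res3_lin ?h1 ?h2 ?h3 ?h1' ?h2' ?h3' mulr0 addr0.
Qed.

Lemma inL0 (R : realType) n (parent : 'I_n -> option 'I_n) (r x : 'I_n -> R) :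
  inL parent r x 0.
Proof.
move=> i; split.
- have := res1_lin parent r i 1 0 0; rewrite scale1r addr0 mul1r; lra.
- have := res2_lin parent x i 1 0 0; rewrite scale1r addr0 mul1r; lra.
- have := res3_lin parent r x i 1 0 0; rewrite scale1r addr0 mul1r; lra.
Qed.

Lemma BDF_inL (R : realType) n (parent : 'I_n -> option 'I_n) (r x : 'I_n -> R) u y :
  in_BDF parent r x u y -> inL parent r x (col_mx u y).
Proof.
move=> h i; case: (h i) => e1 e2 e3 _.
rewrite /res1 /res2 /res3 !col_mxKu !col_mxKd.
by split; [rewrite -e1 subrr | rewrite -e2 subrr | rewrite e3 subrr].
Qed.

Theorem lemma2 (R : realType) (n : nat) (parent : 'I_n -> option 'I_n)
  (r x : 'I_n -> R)
  (Htree : is_tree parent)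
  (Hr : forall i, 0 <= r i) (Hx : forall i, 0 <= x i)
  (Hrx : forall i, r i ^+ 2 + x i ^+ 2 != 0)
  (T : nat) (HT : (1 < T)%N)
  (ud : 'I_T -> 'cV[R]_(n + n)) (yd : 'I_T -> 'cV[R]_(n + (n + (n + (n + 1)))))
  (Hdata : forall t, in_BDF parent r x (ud t) (yd t))
  (Hrank : \rank (data_matrix ud yd) = (3 * n + 1)%N)
  (u : 'cV[R]_(n + n)) (y : 'cV[R]_(n + (n + (n + (n + 1))))) :
  in_BDF parent r x u y <->
  exists g : 'cV[R]_T,
    col_mx u y = data_matrix ud yd *m g /\
    hadamard (v_of y) (l_of y) = hadamard (P_of y) (P_of y) + hadamard (Q_of y) (Q_of y).
Proof.
set H := data_matrix ud yd.
have colH g : H *m g = \sum_t g t ord0 *: col_mx (ud t) (yd t).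
  apply/matrixP => i j; rewrite (ord1 j) !mxE summxE; apply: eq_bigr => t _.
  by rewrite !mxE mulrC.
have inLsum g : inL parent r x (H *m g).
  rewrite colH; apply: big_ind.
  - exact: inL0.
  - by move=> a b ha hb; have := inL_lin 1 ha hb; rewrite scale1r.
  - move=> t _; have := inL_lin (g t ord0) (BDF_inL (Hdata t)) (inL0 parent r x).
    by rewrite addr0.
have hker := kernel Htree.
set K := (n + (n + (n + 1)))%N.
have rankM : \rank (H^T *m (Pr R n)^T) = K.
  have := mxrank_mul_ker H^T (Pr R n)^T; rewrite mxrank_tr Hrank.
  suff -> : \rank (H^T :&: kermx (Pr R n)^T)%MS = 0%N.
    by rewrite addn0 => ->; rewrite /K; lia.
  apply/eqP; rewrite mxrank_eq0; apply/eqP; apply/row_matrixP => i; rewrite row0.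
  set w := row i _.
  have h1 : (w <= H^T)%MS := submx_trans (row_sub i _) (capmxSl _ _).
  have h2 : (w <= kermx (Pr R n)^T)%MS := submx_trans (row_sub i _) (capmxSr _ _).
  case/submxP: h1 => D hD; move/sub_kermxP: h2 => h2.
  suff: w^T = 0 by move/(congr1 trmx); rewrite trmxK trmx0.
  apply: hker.
  - by rewrite hD trmx_mul trmxK; apply: inLsum.
  - by rewrite -[Pr R n]trmxK -trmx_mul h2 trmx0.
have full (z : 'rV[R]_K) : exists a : 'rV[R]_T, z = a *m (H^T *m (Pr R n)^T).
  apply/submxP; apply: submx_full; by rewrite /row_full rankM.
split.
- move=> hb; have hc := BDF_inL hb.
  have [a ha] := full (Pr R n *m col_mx u y)^T.
  exists a^T; split.
    apply/eqP; rewrite -subr_eq0; apply/eqP; apply: hker.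
    - by rewrite addrC -scaleN1r; apply: inL_lin => //; apply: inLsum.
    - have e : Pr R n *m col_mx u y = Pr R n *m (H *m a^T).
        by rewrite -[LHS]trmxK ha !trmx_mul !trmxK mulmxA.
      by rewrite mulmxBr e subrr.
  apply/matrixP => i j; rewrite (ord1 j) addE !hadE.
  case: (hb i) => _ _ _ e4; by rewrite mulrC e4 !expr2.
- case=> g [hg hh]; have hc : inL parent r x (col_mx u y) by rewrite hg; apply: inLsum.
  move=> i; case: (hc i); rewrite /res1 /res2 /res3 !col_mxKu !col_mxKd => h1 h2 h3.
  split.
  + by apply/eqP; rewrite -subr_eq0 h1 eqxx.
  + by apply/eqP; rewrite -subr_eq0 h2 eqxx.
  + by apply/eqP; rewrite -subr_eq0 h3 eqxx.
  + have := congr1 (fun M : 'M[R]_(n, 1) => M i ord0) hh; rewrite /= addE !hadE => e.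
    by rewrite mulrC e !expr2.
Qed.
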